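(* For all $x \in \mathcal{X}$ and $y \in \mathcal{Y}$, $P_{Y|X}(y|x) = P^{(k^* )}_{Y|X}(y|x)$, and consequently $\hat y^{(k^* )}(x) = \hat y_{\mathrm{MAP}}(x)$, where $\hat y_{\mathrm{MAP}}(x) = \arg\max_{y \in \mathcal{Y}} P_{Y|X}(y|x)$.
   Context: $X, Y$ are random variables on finite alphabets with joint distribution $P_{X,Y}$. By the modal decomposition, $P_{X,Y}(x,y) = P_X(x) P_Y(y)\left(1 + \sum_{i=1}^K \sigma_i f_i^*(x) g_i^*(y)\right)$ with $\sigma_1 \ge \dots \ge \sigma_K > 0$ and $\mathbb{E}[f_i^*(X) f_j^*(X)] = \mathbb{E}[g_i^*(Y) g_j^*(Y)] = \mathbb{1}\{i=j\}$; let $f^* = (f_1^*,\dots,f_K^* )^T$. The maximal correlation kernel is $k^*(x,x') = f^{*T}(x)\Lambda_{f^*}^{-1} f^*(x')$, the projection kernel of $\mathrm{span}\{f^*\}$, where $\Lambda_{f^*} = \mathbb{E}[f^*(X) f^{*T}(X)]$. For a kernel $k$, the centered kernel is $\tilde k(x,x') = k(x,x') - \bar k(x) - \bar k(x') + \mathbb{E}_{P_X}[\bar k(X)]$ with $\bar k(x) = \mathbb{E}_{P_X}[k(X,x)]$; the kernelized discriminative model is $P^{(k)}_{Y|X}(y|x) = P_Y(y)\left(1 + \mathbb{E}[\tilde k(X, x) \mid Y = y]\right)$, and $\hat y^{(k)}(x) = \arg\max_{y} P^{(k)}_{Y|X}(y|x)$. *)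

(* Defs.v *)
From HB Require Import structures.
From mathcomp Require Import all_boot all_order all_algebra.
Set Implicit Arguments. Unset Strict Implicit. Unset Printing Implicit Defensive.
Import Order.TTheory GRing.Theory Num.Theory.
Local Open Scope ring_scope.

Section Defs.
Variables (R : realFieldType) (X Y : finType).
Variable P : X -> Y -> R.

Definition PX (x : X) : R := \sum_(y : Y) P x y.
Definition PY (y : Y) : R := \sum_(x : X) P x y.

Definition condYX (y : Y) (x : X) : R := P x y / PX x.

Definition EX (h : X -> R) : R := \sum_(x : X) PX x * h x.
Definition condEX (h : X -> R) (y : Y) : R := \sum_(x : X) (P x y / PY y) * h x.

Definition kbar (k : X -> X -> R) (x : X) : R := EX (fun x' => k x' x).
Definition kcent (k : X -> X -> R) (x x' : X) : R :=
  k x x' - kbar k x - kbar k x' + EX (kbar k).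
Definition Pkern (k : X -> X -> R) (y : Y) (x : X) : R :=
  PY y * (1 + condEX (fun x' => kcent k x' x) y).

Definition Lambda (K : nat) (f : 'I_K -> X -> R) : 'M[R]_K :=
  \matrix_(i, j) EX (fun x => f i x * f j x).
Definition projKernel (K : nat) (f : 'I_K -> X -> R) (x x' : X) : R :=
  \sum_(i < K) \sum_(j < K) f i x * invmx (Lambda f) i j * f j x'.

Definition is_argmax (F : Y -> R) (y : Y) : Prop := forall y' : Y, F y' <= F y.
End Defs.

(* Main.v *)
Require Import Defs.
From HB Require Import structures.
From mathcomp Require Import all_boot all_order all_algebra.
From mathcomp Require Import ring.
Import Order.TTheory GRing.Theory Num.Theory.
Local Open Scope ring_scope.

Lemma mean_zero (R : realFieldType) (A B : finType) (K : nat)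
  (pa : A -> R) (pb : B -> R) (Q : A -> B -> R) (sigma : 'I_K -> R)
  (u : 'I_K -> A -> R) (v : 'I_K -> B -> R) :
  (forall a, 0 < pa a) -> \sum_b pb b = 1 ->
  (forall a, \sum_b Q a b = pa a) -> (forall i, 0 < sigma i) ->
  (forall i j, \sum_a pa a * u i a * u j a = (i == j)%:R) ->
  (forall a b, Q a b = pa a * pb b * (1 + \sum_(i < K) sigma i * u i a * v i b)) ->
  forall j, \sum_b pb b * v j b = 0.
Proof.
move=> Hpa Hpb HQ Hs Horth Hform.
set c := fun i => \sum_b pb b * v i b.
have T0 : forall a, \sum_(i < K) sigma i * u i a * c i = 0.
  move=> a; have := HQ a.
  rewrite (eq_bigr (fun b => pa a * (pb b * (1 + \sum_(i < K) sigma i * u i a * v i b))));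
    last by move=> b _; rewrite Hform mulrA.
  rewrite -mulr_sumr.
  have -> : \sum_b pb b * (1 + \sum_(i < K) sigma i * u i a * v i b)
            = 1 + \sum_(i < K) sigma i * u i a * c i.
    rewrite (eq_bigr (fun b => pb b + \sum_(i < K) pb b * (sigma i * u i a * v i b)));
      last by move=> b _; rewrite mulrDr mulr1 mulr_sumr.
    rewrite big_split /= Hpb; congr (_ + _).
    rewrite exchange_big; apply eq_bigr => i _.
    rewrite /c mulr_sumr; apply eq_bigr => b _; ring.
  rewrite mulrDr mulr1 => E.
  have : pa a * (\sum_(i < K) sigma i * u i a * c i) = 0.
    by apply: (addrI (pa a)); rewrite E addr0.
  by move/eqP; rewrite mulf_eq0 (gt_eqF (Hpa a)) /= => /eqP.
move=> j.
have : \sum_a pa a * u j a * (\sum_(i < K) sigma i * u i a * c i) = 0.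
  by apply big1 => a _; rewrite T0 mulr0.
rewrite (eq_bigr (fun a => \sum_(i < K) sigma i * c i * (pa a * u j a * u i a)));
  last by move=> a _; rewrite mulr_sumr; apply eq_bigr => i _; ring.
rewrite exchange_big /=.
under eq_bigr do rewrite -mulr_sumr Horth.
rewrite (bigD1 j) //= eqxx mulr1 big1 ?addr0; last first.
  by move=> i /negbTE; rewrite eq_sym => ->; rewrite mulr0.
by move/eqP; rewrite mulf_eq0 (gt_eqF (Hs j)) /= => /eqP.
Qed.

Theorem mainTheorem4 (R : realFieldType) (X Y : finType) (P : X -> Y -> R)
  (K : nat) (sigma : 'I_K -> R) (f : 'I_K -> X -> R) (g : 'I_K -> Y -> R) :
  (forall x y, 0 <= P x y) ->
  \sum_(x : X) \sum_(y : Y) P x y = 1 ->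
  (forall x, 0 < PX P x) ->
  (forall y, 0 < PY P y) ->
  (forall i j : 'I_K, (i <= j)%N -> sigma j <= sigma i) ->
  (forall i, 0 < sigma i) ->
  (forall i j : 'I_K, \sum_(x : X) PX P x * f i x * f j x = (i == j)%:R) ->
  (forall i j : 'I_K, \sum_(y : Y) PY P y * g i y * g j y = (i == j)%:R) ->
  (forall x y, P x y =
     PX P x * PY P y * (1 + \sum_(i < K) sigma i * f i x * g i y)) ->
  (forall x y, condYX P y x = Pkern P (projKernel P f) y x) /\
  (forall x y, is_argmax (fun y' => Pkern P (projKernel P f) y' x) y <->
               is_argmax (fun y' => condYX P y' x) y).
Proof.
move=> _ Hsum HPX HPY _ Hs Hof Hog HP.
have PYsum : \sum_y PY P y = 1 by rewrite /PY exchange_big.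
have PXsum : \sum_x PX P x = 1 by [].
have Eg : forall j, \sum_y PY P y * g j y = 0.
  apply: (@mean_zero R X Y K (PX P) (PY P) P sigma f g) => //.
have Ef : forall j, \sum_x PX P x * f j x = 0.
  apply: (@mean_zero R Y X K (PY P) (PX P) (fun y x => P x y) sigma g f) => //.
  move=> y x; rewrite HP [PX P x * _]mulrC; congr (_ * (1 + _)).
  by apply eq_bigr => i _; ring.
have Lam : Lambda P f = 1%:M.
  apply/matrixP => i j; rewrite !mxE /EX -Hof.
  by apply eq_bigr => x _; rewrite mulrA.
have kE : forall x x', projKernel P f x x' = \sum_(i < K) f i x * f i x'.
  move=> x x'; rewrite /projKernel Lam invmx1; apply eq_bigr => i _.
  rewrite (bigD1 i) //= mxE eqxx mulr1 big1 ?addr0 // => j /negbTE ji.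
  by rewrite mxE eq_sym ji mulr0 mul0r.
have kb : forall x, kbar P (projKernel P f) x = 0.
  move=> x; rewrite /kbar /EX.
  under eq_bigr do rewrite kE mulr_sumr.
  rewrite exchange_big big1 // => i _.
  rewrite (eq_bigr (fun x' => f i x * (PX P x' * f i x'))); last by move=> x' _; ring.
  by rewrite -mulr_sumr Ef mulr0.
have kc : forall x x', kcent P (projKernel P f) x x' = projKernel P f x x'.
  move=> x x'; rewrite /kcent !kb !subr0 /EX big1 ?addr0 // => x'' _.
  by rewrite kb mulr0.
have H1 : forall i y, \sum_x' P x' y * f i x' = PY P y * (sigma i * g i y).
  move=> i y.
  rewrite (eq_bigr (fun x' => PY P y * (PX P x' * f i x') +
     \sum_(j < K) PY P y * (sigma j * g j y) * (PX P x' * f j x' * f i x')));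
    last first.
    move=> x' _; rewrite HP mulrDr mulr1 mulrDl; congr (_ + _); first ring.
    rewrite mulr_sumr mulr_suml; apply eq_bigr => j _; ring.
  rewrite big_split /= -mulr_sumr Ef mulr0 add0r exchange_big /=.
  under eq_bigr do rewrite -mulr_sumr Hof.
  rewrite (bigD1 i) //= eqxx mulr1 big1 ?addr0 // => j /negbTE ->.
  by rewrite mulr0.
have first : forall x y, condYX P y x = Pkern P (projKernel P f) y x.
  move=> x y; rewrite /condYX /Pkern /condEX.
  under eq_bigr do rewrite kc kE.
  have -> : \sum_x' P x' y / PY P y * (\sum_(i < K) f i x' * f i x)
          = \sum_(i < K) sigma i * f i x * g i y.
    rewrite (eq_bigr (fun x' => \sum_(i < K) (PY P y)^-1 * f i x * (P x' y * f i x')));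
      last by move=> x' _; rewrite mulr_sumr; apply eq_bigr => i _; ring.
    rewrite exchange_big; apply eq_bigr => i _; rewrite -mulr_sumr H1.
    by field; rewrite gt_eqF.
  by rewrite HP; field; rewrite gt_eqF.
split => // x y; split => H y'.
  by rewrite !first; exact: H.
by rewrite -(first x y') -(first x y); exact: H.
Qed.
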